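(* Let $(V,E,d)$ be a multi-weighted game graph and $v\in V$. If $\tau$ is a strategy of Player 2 winning from $(v,\vec H)$ in the perfect half space game $\mathrm{PHS}(\widehat V,\widehat E,d)$ for some $\vec H\in\mathcal H$, then the strategy obtained from $\tau$ by projecting away the perfect half space components (and keeping track of them internally, starting from $\vec H$) is winning for Player 2 from $v$ in the bounding game $\mathrm{Bnd}(V,E,d)$. In particular, if Player 2 wins $\mathrm{PHS}(\widehat V,\widehat E,d)$ from $v$, he wins $\mathrm{Bnd}(V,E,d)$ from $v$; and if $\tau$ is positional and perfect half space oblivious, its projection is a positional strategy in $\mathrm{Bnd}(V,E,d)$.
   Context: A multi-weighted game graph is $(V,E,d)$ with $d\ge1$, finite $V=V_1\uplus V_2$, finite $E\subseteq V\times\mathbb Z^d\times V$ with every vertex having an outgoing edge, strict alternation of players, weights determined by endpoints, not all weights zero; $\|\vec w\|=\max_i|\vec w(i)|$, $\|E\|$ the maximal norm of an edge weight. Bounding game $\mathrm{Bnd}(V,E,d)$: a play $v_0\xrightarrow{\vec w_1}v_1\cdots$ is won by Player 1 iff $\{\|\sum_{j=1}^n\vec w_j\|:n\in\mathbb N\}$ is bounded; otherwise by Player 2. A partially perfect half space is a tuple $(\vec h_1,\dots,\vec h_k)$, $0\le k\le d$, of mutually orthogonal nonzero vectors in $\mathbb Z^d$; perfect if $k=d$; norm $\max_j\|\vec h_j\|$. $\mathcal H$ is the set of perfect half spaces of norm at most $|V|\cdot\|E\|$. $(\widehat V,\widehat E,d)$ has $\widehat V_i=V_i\times\mathcal H$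 and edges $(v,\vec H)\xrightarrow{\vec w}(v',\vec H')$ for $v\xrightarrow{\vec w}v'\in E$, $\vec H,\vec H'\in\mathcal H$, with $\vec H=\vec H'$ whenever $v\in V_1$. In $\mathrm{PHS}(\widehat V,\widehat E,d)$ a play $(v_0,\vec H_0)\xrightarrow{\vec w_1}(v_1,\vec H_1)\cdots$ is won by Player 2 if some partially perfect half space $(\vec g_1,\dots,\vec g_k)$, $k>0$, is a prefix of $\vec H_i$ for all large $i$, with $\limsup_n\sum_{j\le n}\vec w_j\cdot\vec g_k=-\infty$ and $\liminf_n\sum_{j\le n}\vec w_j\cdot\vec g_\ell<+\infty$ for $\ell<k$; otherwise by Player 1. Player 2 wins PHS from $v$ if he wins from $(v,\vec H)$ for some $\vec H\in\mathcal H$. A positional Player 2 strategy is perfect half space oblivious if at each $v\in V_2$ it makes the same move at $(v,\vec H)$ for all $\vec H$. *)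

(* Defs.v *)
From HB Require Import structures.
From mathcomp Require Import all_boot all_order all_algebra.
Set Implicit Arguments. Unset Strict Implicit. Unset Printing Implicit Defensive.
Import Order.TTheory GRing.Theory Num.Theory.

Definition vec (d : nat) := 'rV[int]_d.

Definition vnorm d (u : vec d) : nat := \max_(i < d) `|u ord0 i|%N.

Definition dot d (u v : vec d) : int := (\sum_(i < d) u ord0 i * v ord0 i)%R.

Definition ppHS d (H : seq (vec d)) : bool :=
  [&& size H <= d, all (fun h => h != 0%R) H
    & pairwise (fun a b => dot a b == 0%R) H].

Definition perfectHS d (H : seq (vec d)) : bool := ppHS H && (size H == d).

Definition hsnorm d (H : seq (vec d)) : nat := \max_(h <- H) vnorm h.

(* Vertices V : finType; own1 v = true iff v \in V_1; edges E : rel V;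
   the weight of an edge is determined by its endpoints: w u v. *)
Definition game_graph d (V : finType) (own1 : V -> bool) (E : rel V)
    (w : V -> V -> vec d) : Prop :=
  [/\ (1 <= d)%N,
      (forall u, exists v, E u v),
      (forall u v, E u v -> own1 u != own1 v)
    & exists u v, E u v && (w u v != 0%R)].

Definition Enorm d (V : finType) (E : rel V) (w : V -> V -> vec d) : nat :=
  \max_(u : V) \max_(v : V | E u v) vnorm (w u v).

Definition inHH d (V : finType) (E : rel V) (w : V -> V -> vec d)
    (H : seq (vec d)) : bool :=
  perfectHS H && (hsnorm H <= #|V| * Enorm E w).

(* A strategy maps a non-empty history [x_0; ...; x_n] to the next position. *)
Definition strategy (X : Type) := seq X -> X.

Definition legal2 (X : Type) (vert : pred X) (own1 : X -> bool) (edge : rel X)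
    (tau : strategy X) : Prop :=
  forall x s, vert x -> path edge x s -> ~~ own1 (last x s) ->
    edge (last x s) (tau (x :: s)).

Definition consistent2 (X : Type) (own1 : X -> bool) (edge : rel X)
    (tau : strategy X) (x0 : X) (p : nat -> X) : Prop :=
  [/\ p 0%N = x0,
      (forall n, edge (p n) (p n.+1))
    & (forall n, ~~ own1 (p n) -> p n.+1 = tau (mkseq p n.+1))].

Definition winning2_from (X : Type) (own1 : X -> bool) (edge : rel X)
    (win2 : (nat -> X) -> Prop) (tau : strategy X) (x0 : X) : Prop :=
  forall p, consistent2 own1 edge tau x0 p -> win2 p.

Definition positional2 (X : Type) (vert : pred X) (own1 : X -> bool)
    (edge : rel X) (tau : strategy X) (f : X -> X) : Prop :=
  forall x s, vert x -> path edge x s -> ~~ own1 (last x s) ->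
    tau (x :: s) = f (last x s).

Definition Bnd_vert (V : finType) : pred V := predT.

Definition psum d (V : Type) (w : V -> V -> vec d) (p : nat -> V) (n : nat)
  : vec d := (\sum_(j < n) w (p j) (p j.+1))%R.

Definition Bnd_win2 d (V : finType) (w : V -> V -> vec d) (p : nat -> V) : Prop :=
  ~ (exists B : nat, forall n, (vnorm (psum w p n) <= B)%N).

Definition Bnd_wins2 d (V : finType) (own1 : V -> bool) (E : rel V)
    (w : V -> V -> vec d) (v : V) : Prop :=
  exists sigma : strategy V,
    legal2 (@Bnd_vert V) own1 E sigma /\
    winning2_from own1 E (Bnd_win2 w) sigma v.

Definition hatX d (V : finType) := (V * seq (vec d))%type.

Definition hat_vert d (V : finType) (E : rel V) (w : V -> V -> vec d)
  : pred (hatX d V) := fun x => inHH E w x.2.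

Definition hat_own1 d (V : finType) (own1 : V -> bool) (x : hatX d V) : bool :=
  own1 x.1.

Definition hat_edge d (V : finType) (own1 : V -> bool) (E : rel V)
    (w : V -> V -> vec d) : rel (hatX d V) :=
  fun x y => [&& E x.1 y.1, inHH E w x.2, inHH E w y.2
                 & own1 x.1 ==> (x.2 == y.2)].

Definition PHS_win2 d (V : finType) (w : V -> V -> vec d)
    (p : nat -> hatX d V) : Prop :=
  let S := psum w (fun n => (p n).1) in
  exists g : seq (vec d),
    [/\ ppHS g, (0 < size g)%N,
        (exists N, forall i, (N <= i)%N -> prefix g (p i).2),
        (* limsup_n S_n . g_k = -oo *)
        (forall M : int, exists N, forall n, (N <= n)%N ->
            (dot (S n) (last 0%R g) <= M)%R)
      & (* liminf_n S_n . g_l < +oo for l < k *)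
        (forall l, (l < (size g).-1)%N ->
            exists M : int, forall N, exists2 n, (N <= n)%N &
              (dot (S n) (nth 0%R g l) <= M)%R)].

Definition PHS_wins2 d (V : finType) (own1 : V -> bool) (E : rel V)
    (w : V -> V -> vec d) (v : V) : Prop :=
  exists H, inHH E w H /\
  exists tau : strategy (hatX d V),
    legal2 (hat_vert E w) (hat_own1 own1) (hat_edge own1 E w) tau /\
    winning2_from (hat_own1 own1) (hat_edge own1 E w) (PHS_win2 w) tau (v, H).

Definition positional_oblivious2 d (V : finType) (own1 : V -> bool) (E : rel V)
    (w : V -> V -> vec d) (tau : strategy (hatX d V)) : Prop :=
  exists f : hatX d V -> hatX d V,
    positional2 (hat_vert E w) (hat_own1 own1) (hat_edge own1 E w) tau f /\
    (forall v H H', ~~ own1 v -> inHH E w H -> inHH E w H' ->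
       f (v, H) = f (v, H')).

(* Lift a history v_0 ... v_n of Bnd to a history (v_0,H_0) ... (v_n,H_n),
   with H_0 = H, H_{i+1} = H_i if v_i in V_1, and otherwise H_{i+1} is the
   half space component chosen by tau at the lifted prefix. *)
Fixpoint lift_aux d (V : finType) (own1 : V -> bool)
    (tau : strategy (hatX d V)) (acc : seq (hatX d V)) (Hc : seq (vec d))
    (vs : seq V) : seq (hatX d V) :=
  match vs with
  | [::] => acc
  | v :: vs' =>
      let acc' := rcons acc (v, Hc) in
      lift_aux own1 tau acc' (if own1 v then Hc else (tau acc').2) vs'
  end.

Definition lift_hist d (V : finType) (own1 : V -> bool)
    (tau : strategy (hatX d V)) (H : seq (vec d)) (vs : seq V) :=
  lift_aux own1 tau [::] H vs.

Definition proj_strategy d (V : finType) (own1 : V -> bool)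
    (tau : strategy (hatX d V)) (H : seq (vec d)) : strategy V :=
  fun vs => (tau (lift_hist own1 tau H vs)).1.

(* Main.v *)
Require Import Defs.
From HB Require Import structures.
From mathcomp Require Import all_boot all_order all_algebra.
From mathcomp Require Import zify.
Import Order.TTheory GRing.Theory Num.Theory.
Set Implicit Arguments. Unset Strict Implicit. Unset Printing Implicit Defensive.

Lemma norm_dot d (u h : vec d) :
  (`|dot u h| <= Posz (d * (vnorm u * vnorm h)))%R.
Proof.
rewrite /dot; apply: (le_trans (ler_norm_sum _ _ _)).
have -> : Posz (d * (vnorm u * vnorm h)) =
   (\sum_(i < d) Posz (vnorm u * vnorm h))%R.
  by rewrite sumr_const card_ord -mulr_natr natz -PoszM mulnC.
apply: ler_sum => i _; rewrite normrM.
have Hu : (`|u ord0 i| <= Posz (vnorm u))%R.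
  by rewrite -abszE lez_nat; apply: (leq_bigmax (F := fun i => `|u ord0 i|%N)).
have Hh : (`|h ord0 i| <= Posz (vnorm h))%R.
  by rewrite -abszE lez_nat; apply: (leq_bigmax (F := fun i => `|h ord0 i|%N)).
by rewrite PoszM; apply: ler_pM.
Qed.

Fixpoint curH d (V : finType) (own1 : V -> bool)
    (tau : strategy (hatX d V)) (acc : seq (hatX d V)) (Hc : seq (vec d))
    (vs : seq V) : seq (vec d) :=
  match vs with
  | [::] => Hc
  | v :: vs' =>
      let acc' := rcons acc (v, Hc) in
      @curH d V own1 tau acc' (if own1 v then Hc else (tau acc').2) vs'
  end.

Lemma liftA d (V : finType) (own1 : V -> bool) (tau : strategy (hatX d V))
  vs v : forall acc Hc,
  lift_aux own1 tau acc Hc (rcons vs v) =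
  rcons (lift_aux own1 tau acc Hc vs) (v, curH own1 tau acc Hc vs).
Proof. by elim: vs => [|a vs IH] acc Hc //=; rewrite IH. Qed.

Lemma curHA d (V : finType) (own1 : V -> bool) (tau : strategy (hatX d V))
  vs v : forall acc Hc,
  curH own1 tau acc Hc (rcons vs v) =
  if own1 v then curH own1 tau acc Hc vs
  else (tau (rcons (lift_aux own1 tau acc Hc vs) (v, curH own1 tau acc Hc vs))).2.
Proof. by elim: vs => [|a vs IH] acc Hc //=; rewrite IH. Qed.

Arguments curH : simpl never.

Lemma hat_last_in d (V : finType) (own1 : V -> bool) (E : rel V)
  (w : V -> V -> vec d) s : forall x,
  path (hat_edge own1 E w) x s -> inHH E w x.2 -> inHH E w (last x s).2.
Proof.
elim: s => [|y s IH] x //= /andP [Hxy Hp] _; apply: IH => //.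
by case/and4P: Hxy.
Qed.

Lemma liftB d (V : finType) (own1 : V -> bool) (E : rel V)
  (w : V -> V -> vec d) (tau : strategy (hatX d V)) H x :
  inHH E w H ->
  legal2 (hat_vert E w) (hat_own1 own1) (hat_edge own1 E w) tau ->
  forall s, path E x s -> exists s',
    lift_hist own1 tau H (x :: s) = (x, H) :: s' /\
    path (hat_edge own1 E w) (x, H) s'.
Proof.
move=> HH Hleg; elim/last_ind => [|t v IH].
  by move=> _; exists [::].
rewrite rcons_path => /andP [Ht Hv].
case: (IH Ht) => t' [Hl Hp].
have Hlast : last (x, H) t' =
    (last x t, curH own1 tau [::] H (belast x t)).
  have := congr1 (last (x, H)) Hl.
  by rewrite /lift_hist lastI liftA last_rcons /=.
rewrite /lift_hist -rcons_cons liftA.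
exists (rcons t' (v, curH own1 tau [::] H (x :: t))); split.
  by rewrite -/(lift_hist own1 tau H (x :: t)) Hl.
rewrite rcons_path Hp /= Hlast /hat_edge /= Hv /=.
have Hin := hat_last_in Hp HH; rewrite Hlast /= in Hin.
rewrite [x :: t]lastI curHA.
rewrite -/(lift_hist own1 tau H (belast x t)).
have -> : rcons (lift_hist own1 tau H (belast x t))
   (last x t, curH own1 tau [::] H (belast x t)) = (x, H) :: t'.
  by rewrite -Hl /lift_hist lastI liftA.
case: ifP => Ho; first by rewrite Hin eqxx.
have := Hleg (x, H) t' HH Hp; rewrite Hlast /hat_own1 /= Ho => /(_ isT).
by case/and4P => _ _ -> _; rewrite Hin.
Qed.

Lemma liftLast d (V : finType) (own1 : V -> bool) (tau : strategy (hatX d V))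
  H x s y :
  last y (lift_hist own1 tau H (x :: s)) =
  (last x s, curH own1 tau [::] H (belast x s)).
Proof. by rewrite /lift_hist lastI liftA last_rcons. Qed.

Lemma path_iota (T : Type) (e : rel T) (f : nat -> T) m : forall k,
  path e (f k) (map f (iota k.+1 m)) <->
  (forall i, (i < m)%N -> e (f (k + i)) (f (k + i).+1)).
Proof.
elim: m => [|m IH] k /=; first by split => // _ i.
split.
  move=> /andP [H1 /IH H2] [|i] Hi; first by rewrite addn0.
  by rewrite -addSnnS; apply: H2.
move=> Hi; apply/andP; split; first by have := Hi 0%N isT; rewrite addn0.
by apply/IH => i Hlt; rewrite addSnnS; apply: Hi.
Qed.

Lemma main1 d (V : finType) (own1 : V -> bool) (E : rel V)
    (w : V -> V -> vec d) (v : V) (H : seq (vec d)) (tau : strategy (hatX d V)) :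
     inHH E w H ->
     legal2 (hat_vert E w) (hat_own1 own1) (hat_edge own1 E w) tau ->
     winning2_from (hat_own1 own1) (hat_edge own1 E w) (PHS_win2 w) tau (v, H) ->
     legal2 (@Bnd_vert V) own1 E (proj_strategy own1 tau H) /\
     winning2_from own1 E (Bnd_win2 w) (proj_strategy own1 tau H) v.
Proof.
move=> HH Hleg Hwin; split.
  move=> x s _ Hp Ho.
  case: (liftB HH Hleg Hp) => s' [Hl Hp'].
  have Hlast := liftLast own1 tau H x s (x, H); rewrite Hl /= in Hlast.
  rewrite /proj_strategy Hl.
  have := Hleg (x, H) s' HH Hp'; rewrite Hlast /hat_own1 /= => /(_ Ho).
  by case/and4P.
move=> p [Hp0 HpE Hpc].
pose Hn n := curH own1 tau [::] H (mkseq p n).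
pose q n := (p n, Hn n).
have Lq : forall n, lift_hist own1 tau H (mkseq p n) = mkseq q n.
  elim=> [|n IH]; first by [].
  by rewrite !mkseqS /lift_hist liftA -/(lift_hist own1 tau H _) IH.
have Pp : forall n, path E (p 0%N) (map p (iota 1 n)).
  by move=> n; apply/(path_iota E p n 0).
have Eq : forall n, hat_edge own1 E w (q n) (q n.+1).
  move=> n.
  case: (liftB HH Hleg (Pp n.+1)) => s' [Hl Hp'].
  have : lift_hist own1 tau H (mkseq p n.+2) = mkseq q n.+2 by apply: Lq.
  have -> : mkseq p n.+2 = p 0%N :: map p (iota 1 n.+1) by [].
  have -> : mkseq q n.+2 = q 0%N :: map q (iota 1 n.+1) by [].
  rewrite Hl => Heq; have Es := congr1 behead Heq; have Eh := congr1 (head (v, H)) Heq.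
  rewrite /= in Es Eh; rewrite Es Eh in Hp'.
  by move/(path_iota _ q n.+1 0): Hp' => /(_ n (ltnSn n)); rewrite add0n.
have Hq : consistent2 (hat_own1 own1) (hat_edge own1 E w) tau (v, H) q.
  split; [by rewrite /q Hp0 | exact: Eq | ].
  move=> n Ho; rewrite /hat_own1 /= in Ho.
  have -> : q n.+1 = (p n.+1, Hn n.+1) by [].
  rewrite (Hpc n Ho) /proj_strategy Lq /Hn [mkseq p n.+1]mkseqS curHA (negbTE Ho).
  rewrite -/(lift_hist own1 tau H _) Lq -/(Hn n) -/(q n) -mkseqS.
  by case: (tau _).
case: (Hwin q Hq) => g [_ Hsz _ Hlim _] [B HB].
set h := last 0%R g.
have [N HN] := Hlim (- Posz (d * (B * vnorm h)) - 1)%R.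
have H2 : (dot (psum w p N) h <= - Posz (d * (B * vnorm h)) - 1)%R :=
  HN N (leqnn N).
have := norm_dot (psum w p N) h; rewrite ler_norml => /andP [H1 _].
have H3 : (d * (vnorm (psum w p N) * vnorm h) <= d * (B * vnorm h))%N.
  by rewrite leq_mul2l leq_mul2r HB !orbT.
lia.
Qed.

Theorem mainTheorem7 (d : nat) (V : finType) (own1 : V -> bool) (E : rel V)
    (w : V -> V -> vec d) :
  game_graph own1 E w ->
  (* main claim *)
  (forall (v : V) (H : seq (vec d)) (tau : strategy (hatX d V)),
     inHH E w H ->
     legal2 (hat_vert E w) (hat_own1 own1) (hat_edge own1 E w) tau ->
     winning2_from (hat_own1 own1) (hat_edge own1 E w) (PHS_win2 w) tau (v, H) ->
     legal2 (@Bnd_vert V) own1 E (proj_strategy own1 tau H) /\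
     winning2_from own1 E (Bnd_win2 w) (proj_strategy own1 tau H) v)
  /\
  (* in particular *)
  (forall v : V, PHS_wins2 own1 E w v -> Bnd_wins2 own1 E w v)
  /\
  (* positional and oblivious strategies project to positional strategies *)
  (forall (H : seq (vec d)) (tau : strategy (hatX d V)),
     inHH E w H ->
     legal2 (hat_vert E w) (hat_own1 own1) (hat_edge own1 E w) tau ->
     positional_oblivious2 own1 E w tau ->
     exists g : V -> V,
       positional2 (@Bnd_vert V) own1 E (proj_strategy own1 tau H) g).
Proof.
move=> _; split; first by move=> v H tau; apply: main1.
split.
  move=> v [H [HH [tau [Hleg Hwin]]]].
  by exists (proj_strategy own1 tau H); apply: main1 Hwin.
move=> H tau HH Hleg [f [Hpos Hobl]].
exists (fun u => (f (u, H)).1) => x s _ Hp Ho.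
case: (liftB HH Hleg Hp) => s' [Hl Hp'].
have Hlast := liftLast own1 tau H x s (x, H); rewrite Hl /= in Hlast.
have Hin := hat_last_in Hp' HH; rewrite Hlast /= in Hin.
rewrite /proj_strategy Hl (Hpos (x, H) s' HH Hp'); last by rewrite Hlast.
by rewrite Hlast (Hobl _ _ _ Ho Hin HH).
Qed.
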